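(* Let $A$ be an $n\times m$ matrix with entries in $[0,1]$, and suppose the row player follows follow-the-regularized-leader with a regularizer $R:\Delta_n\to\mathbb{R}$, i.e. $x_t=\arg\min_{x\in\Delta_n}x^\top\big(\sum_{i=1}^{t-1}Ay_i\big)+R(x)$, where the minimizer is assumed to be unique at every round. If there exists a fully mixed (all entries positive) minimax strategy of the row player, then this algorithm has the stability property: for every minimax strategy $y^*$ of the column player and every round $t$, if $y_t=y^*$ then $x_{t+1}=x_t$.
   Context: Repeated two-player zero-sum game: at round $t$ the row player plays $x_t\in\Delta_n$ and the column player $y_t\in\Delta_m$; the row player minimizes, the column player maximizes $x_t^\top Ay_t$. $v$ is the value of the game; a minimax strategy of the row player is $x$ with $\max_{y\in\Delta_m}x^\top Ay=v$, and of the column player is $y$ with $\min_{x\in\Delta_n}x^\top Ay=v$. *)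

(* Defs.v *)
From HB Require Import structures.
From mathcomp Require Import all_boot all_order all_algebra.
From mathcomp Require Import reals.
Set Implicit Arguments. Unset Strict Implicit. Unset Printing Implicit Defensive.
Import Order.TTheory GRing.Theory Num.Theory.
Local Open Scope ring_scope.

Definition in_simplex (R : realType) (n : nat) (x : 'cV[R]_n) : Prop :=
  (forall i, 0 <= x i 0) /\ \sum_i x i 0 = 1.

Definition fully_mixed (R : realType) (n : nat) (x : 'cV[R]_n) : Prop :=
  forall i, 0 < x i 0.

Definition payoff (R : realType) (n m : nat) (A : 'M[R]_(n, m))
  (x : 'cV[R]_n) (y : 'cV[R]_m) : R := (x^T *m A *m y) 0 0.

(* v is the value of the game: v = min_{x in Delta_n} max_{y in Delta_m} x^T A y. *)
Definition game_value (R : realType) (n m : nat) (A : 'M[R]_(n, m)) (v : R) : Prop :=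
  (exists2 x, in_simplex x & forall y, in_simplex y -> payoff A x y <= v) /\
  (forall x, in_simplex x -> exists2 y, in_simplex y & v <= payoff A x y).

Definition row_minimax (R : realType) (n m : nat) (A : 'M[R]_(n, m)) (v : R)
  (x : 'cV[R]_n) : Prop :=
  in_simplex x /\
  (exists2 y, in_simplex y & payoff A x y = v) /\
  (forall y, in_simplex y -> payoff A x y <= v).

Definition col_minimax (R : realType) (n m : nat) (A : 'M[R]_(n, m)) (v : R)
  (y : 'cV[R]_m) : Prop :=
  in_simplex y /\
  (exists2 x, in_simplex x & payoff A x y = v) /\
  (forall x, in_simplex x -> v <= payoff A x y).

(* FTRL objective at round t (rounds are 1-based): x^T (sum_{i=1}^{t-1} A y_i) + Reg x. *)
Definition ftrl_obj (R : realType) (n m : nat) (A : 'M[R]_(n, m))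
  (Reg : 'cV[R]_n -> R) (y : nat -> 'cV[R]_m) (t : nat) (x : 'cV[R]_n) : R :=
  (x^T *m (\sum_(1 <= i < t) A *m y i)) 0 0 + Reg x.

Definition unique_argmin_simplex (R : realType) (n : nat) (f : 'cV[R]_n -> R)
  (z : 'cV[R]_n) : Prop :=
  in_simplex z /\ forall x, in_simplex x -> x <> z -> f z < f x.

(* Main.v *)
Require Import Defs.
From HB Require Import structures.
From mathcomp Require Import all_boot all_order all_algebra.
From mathcomp Require Import reals.
Import Order.TTheory GRing.Theory Num.Theory.
Local Open Scope ring_scope.

Lemma payoffE (R : realType) (n m : nat) (A : 'M[R]_(n, m)) x y :
  payoff A x y = \sum_i x i 0 * (A *m y) i 0.
Proof.
rewrite /payoff -mulmxA mxE; apply: eq_bigr => i _; by rewrite mxE.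
Qed.

Lemma const_col {R : realType} {n m : nat} {A : 'M[R]_(n, m)} {v xs ystar} :
  row_minimax A v xs -> fully_mixed xs -> col_minimax A v ystar ->
  forall i, (A *m ystar) i 0 = v.
Proof.
move=> [[xs0 xs1] [_ xsle]] xsm [ys [_ ysge]] i.
have ge : forall j, v <= (A *m ystar) j 0.
  move=> j; have := ysge (delta_mx j 0).
  have hs : in_simplex (delta_mx j 0 : 'cV[R]_n).
    split; first by move=> k; rewrite mxE; case: (_ && _).
    rewrite (bigD1 j) //= mxE !eqxx /= big1 ?addr0 // => k hk.
    by rewrite mxE (negbTE hk).
  move=> /(_ hs); rewrite payoffE (bigD1 j) //= mxE !eqxx mul1r big1 ?addr0 //.
  by move=> k hk; rewrite mxE (negbTE hk) mul0r.
have hxs' : payoff A xs ystar <= v by apply: xsle.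
have : \sum_j xs j 0 * ((A *m ystar) j 0 - v) = 0.
  apply/eqP; rewrite eq_le; apply/andP; split; last first.
    by apply: sumr_ge0 => j _; rewrite mulr_ge0 // subr_ge0.
  under eq_bigr do rewrite mulrBr.
  by rewrite sumrB -mulr_suml xs1 mul1r -payoffE subr_le0.
move/psumr_eq0P.
have nn : forall j : 'I_n, 0 <= xs j 0 * ((A *m ystar) j 0 - v).
  by move=> j; rewrite mulr_ge0 // subr_ge0.
move=> /(_ (fun j _ => nn j) i isT) /eqP; rewrite mulf_eq0 (gt_eqF (xsm i)) /= subr_eq0.
by move/eqP.
Qed.

Theorem theorem19 (R : realType) (n m : nat) (A : 'M[R]_(n, m))
  (hA : forall i j, 0 <= A i j <= 1)
  (Reg : 'cV[R]_n -> R)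
  (x : nat -> 'cV[R]_n) (y : nat -> 'cV[R]_m)
  (hy : forall t, (1 <= t)%N -> in_simplex (y t))
  (hx : forall t, (1 <= t)%N -> unique_argmin_simplex (ftrl_obj A Reg y t) (x t))
  (v : R) (hv : game_value A v)
  (hmixed : exists2 xs, row_minimax A v xs & fully_mixed xs) :
  forall ystar, col_minimax A v ystar ->
  forall t, (1 <= t)%N -> y t = ystar -> x t.+1 = x t.
Proof.
move=> ystar hys t ht hyt.
case: hmixed => xs hxs hxm.
have hc := const_col hxs hxm hys.
have shift : forall z, in_simplex z ->
    ftrl_obj A Reg y t.+1 z = ftrl_obj A Reg y t z + v.
  move=> z [z0 z1]; rewrite /ftrl_obj big_nat_recr //= mulmxDr mxE.
  rewrite -addrA [_ + Reg z]addrC addrA; congr (_ + _ + _).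
  rewrite hyt mxE; under eq_bigr do rewrite mxE hc.
  by rewrite -mulr_suml z1 mul1r.
have [s1 m1] := hx t.+1 isT.
have [s0 m0] := hx t ht.
apply/eqP/negPn/negP => /eqP hne.
have a := m1 _ s0 (nesym hne).
have b := m0 _ s1 hne.
rewrite !shift // ltrD2r in a.
by move: (lt_trans a b); rewrite ltxx.
Qed.
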